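(* Let $H$ and $X$ be Hilbert spaces with inner products $(\cdot,\cdot)$, let $X^*$ be the dual space of $X$, and let $\langle\cdot,\cdot\rangle$ denote the sesquilinear duality pairing of $X^*$ and $X$. Assume $F:H\to H$ is a linear compact normal operator satisfying $F=GM^*G^*$, where $G:X\to H$ and $M:X^*\to X$ are bounded linear operators and $G^*:H\to X^*$ is defined by $\langle G^*g,\varphi\rangle=(g,G\varphi)$ for all $\varphi\in X$, $g\in H$. Assume further that $G^*$ has a finite dimensional null space and that $M=M_0+C$ for some compact operator $C$ and some self-adjoint operator $M_0$ which is coercive on $G^*(H)$, i.e. there exists $c_0>0$ with $\langle\phi,M_0\phi\rangle\ge c_0\|\phi\|^2$ for all $\phi\in G^*(H)$. Then $F$ has at most a finite number of eigenvalues whose real parts are negative. *)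

(* Defs.v *)
From HB Require Import structures.
From mathcomp Require Import all_boot all_order all_algebra.
From mathcomp Require Import reals.
From mathcomp Require Export complex.
Set Implicit Arguments. Unset Strict Implicit. Unset Printing Implicit Defensive.
Import Order.TTheory GRing.Theory Num.Theory.
Local Open Scope ring_scope.
Local Open Scope complex_scope.

Section Defs.
Variable R : realType.
Local Notation C := R[i].

Definition converges_to (V : zmodType) (nV : V -> R) (u : nat -> V) (l : V) :=
  forall e : R, 0 < e -> exists N, forall k, (N <= k)%N -> nV (u k - l) < e.

Definition cauchy_seq (V : zmodType) (nV : V -> R) (u : nat -> V) :=
  forall e : R, 0 < e -> exists N, forall m n, (N <= m)%N -> (N <= n)%N ->
    nV (u m - u n) < e.

Definition bounded_op (V W : zmodType) (nV : V -> R) (nW : W -> R) (T : V -> W) :=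
  exists K : R, forall x, nW (T x) <= K * nV x.

(* compact operator: the image of every bounded sequence has a convergent
   subsequence (i.e. the image of the unit ball is relatively compact) *)
Definition compact_op (V W : zmodType) (nV : V -> R) (nW : W -> R) (T : V -> W) :=
  forall u : nat -> V, (exists B : R, forall n, nV (u n) <= B) ->
    exists (phi : nat -> nat) (l : W),
      (forall n, (phi n < phi n.+1)%N) /\
      converges_to nW (fun n => T (u (phi n))) l.

Definition ipnorm (V : Type) (ip : V -> V -> C) (x : V) : R :=
  Num.sqrt (complex.Re (ip x x)).

Definition is_hilbert (V : lmodType C) (ip : V -> V -> C) :=
  [/\ forall (a : C) x y z, ip (a *: x + y) z = a * ip x z + ip y z,
      forall x y, ip y x = (ip x y)^*,
      forall x, complex.Im (ip x x) = 0 /\ 0 <= complex.Re (ip x x),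
      forall x, ip x x = 0 -> x = 0
    & forall u : nat -> V, cauchy_seq (ipnorm ip) u ->
        exists l, converges_to (ipnorm ip) u l].

(* (Xs, pair, nXs) is (a copy of) the dual space X^* of the Hilbert space X:
   the pairing <f, phi> is linear in f and antilinear in phi, f |-> <f, .>
   is a bijection from Xs onto the bounded antilinear functionals on X,
   and nXs is the dual (operator) norm. *)
Definition is_dual (X : lmodType C) (ipX : X -> X -> C)
    (Xs : lmodType C) (pair : Xs -> X -> C) (nXs : Xs -> R) :=
  [/\ forall (a : C) f g phi, pair (a *: f + g) phi = a * pair f phi + pair g phi,
      forall (a : C) f phi psi,
        pair f (a *: phi + psi) = a^* * pair f phi + pair f psi,
      forall f, (forall phi, pair f phi = 0) -> f = 0,
      forall l : X -> C,
        (forall (a : C) phi psi, l (a *: phi + psi) = a^* * l phi + l psi) ->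
        (exists K : R, forall phi, Normc.normc (l phi) <= K * ipnorm ipX phi) ->
        exists f, forall phi, l phi = pair f phi
    & forall f,
        (forall phi, Normc.normc (pair f phi) <= nXs f * ipnorm ipX phi) /\
        (forall e : R, 0 < e -> exists phi,
            ipnorm ipX phi <= 1 /\ nXs f - e < Normc.normc (pair f phi))].

Definition hadjoint (V W : Type) (ipV : V -> V -> C) (ipW : W -> W -> C)
    (F : V -> W) (Fa : W -> V) :=
  forall x y, ipW (F x) y = ipV x (Fa y).

Definition normal_op (V : Type) (ip : V -> V -> C) (F : V -> V) :=
  exists Fa : V -> V, hadjoint ip ip F Fa /\ forall x, F (Fa x) = Fa (F x).

Definition dual_adjoint (X Xs : Type) (pair : Xs -> X -> C)
    (M Ms : Xs -> X) :=
  forall phi psi, pair phi (Ms psi) = (pair psi (M phi))^*.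

Definition op_eigenvalue (V : lmodType C) (F : V -> V) (lam : C) :=
  exists v : V, v <> 0 /\ F v = lam *: v.

Definition finite_dim_kernel (V W : lmodType C) (T : V -> W) :=
  exists (n : nat) (b : 'I_n -> V), forall v, T v = 0 ->
    exists c : 'I_n -> C, v = \sum_(i < n) c i *: b i.

End Defs.

(* Main.v *)
Require Import Defs.
From HB Require Import structures.
From mathcomp Require Import all_boot all_order all_algebra.
From mathcomp Require Import reals complex.
From mathcomp Require Import ring lra.
From Stdlib Require Import ClassicalEpsilon.
Set Implicit Arguments. Unset Strict Implicit.
Import Order.TTheory GRing.Theory Num.Theory.
Local Open Scope ring_scope.
Local Open Scope complex_scope.
Section Cx.
Variable R : realType.
Lemma ReD (x y : R[i]) : complex.Re (x + y) = complex.Re x + complex.Re y.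
Proof. by case: x; case: y. Qed.
Lemma ReM (x y : R[i]) : complex.Re (x * y) = complex.Re x * complex.Re y - complex.Im x * complex.Im y.
Proof. by case: x; case: y. Qed.
Lemma ImM (x y : R[i]) : complex.Im (x * y) = complex.Re x * complex.Im y + complex.Im x * complex.Re y.
Proof. case: x; case: y => /= *. by rewrite addrC mulrC [_ * _]mulrC. Qed.
Lemma ReN (x : R[i]) : complex.Re (- x) = - complex.Re x.
Proof. by case: x. Qed.
Lemma ReB (x y : R[i]) : complex.Re (x - y) = complex.Re x - complex.Re y.
Proof. by case: x; case: y. Qed.
Lemma Re0 : complex.Re (0 : R[i]) = 0. Proof. by []. Qed.
Lemma ReJ (x : R[i]) : complex.Re (x^*) = complex.Re x.
Proof. by case: x. Qed.
Lemma ImJ (x : R[i]) : complex.Im (x^*) = - complex.Im x.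
Proof. by case: x. Qed.
Lemma Re_sum n (f : 'I_n -> R[i]) : complex.Re (\sum_(i < n) f i) = \sum_(i < n) complex.Re (f i).
Proof. exact: (big_morph _ ReD Re0). Qed.
Lemma Re_realC (r : R) : complex.Re (r%:C) = r. Proof. by []. Qed.
Lemma Im_realC (r : R) : complex.Im (r%:C) = 0. Proof. by []. Qed.
Lemma Re_le_norm (x : R[i]) : - Normc.normc x <= complex.Re x.
Proof.
case: x => a b /=. rewrite lerNl.
have h : `|a| <= Num.sqrt (a ^+ 2 + b ^+ 2).
  rewrite -sqrtr_sqr; apply: ler_wsqrtr. by rewrite lerDl sqr_ge0.
apply: le_trans h. by rewrite -normrN ler_norm.
Qed.
End Cx.
Section Hilb.
Variable R : realType.
Variable V : lmodType R[i].
Variable ip : V -> V -> R[i].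
Hypothesis lin : forall (a : R[i]) x y z, ip (a *: x + y) z = a * ip x z + ip y z.
Hypothesis csym : forall x y, ip y x = (ip x y)^*.

Lemma ipDl x y z : ip (x + y) z = ip x z + ip y z.
Proof. have := lin 1 x y z. by rewrite scale1r mul1r. Qed.
Lemma ip0l z : ip 0 z = 0.
Proof. have := ipDl 0 0 z. rewrite addr0 -{1}(addr0 (ip 0 z)). by move/addrI. Qed.
Lemma ipZl a x z : ip (a *: x) z = a * ip x z.
Proof. by rewrite -(addr0 (a *: x)) lin ip0l addr0. Qed.
Lemma ipNl x z : ip (- x) z = - ip x z.
Proof. by rewrite -scaleN1r ipZl mulN1r. Qed.
Lemma ipBl x y z : ip (x - y) z = ip x z - ip y z.
Proof. by rewrite ipDl ipNl. Qed.
Lemma ipDr x y z : ip z (x + y) = ip z x + ip z y.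
Proof. by rewrite [LHS]csym ipDl rmorphD (csym x z) (csym y z). Qed.
Lemma ipZr a x z : ip z (a *: x) = a^* * ip z x.
Proof. by rewrite [LHS]csym ipZl rmorphM (csym x z). Qed.
Lemma ip0r z : ip z 0 = 0.
Proof. by rewrite csym ip0l conjc0. Qed.
Lemma ipNr x z : ip z (- x) = - ip z x.
Proof. by rewrite [LHS]csym ipNl rmorphN (csym x z). Qed.
Lemma ipBr x y z : ip z (x - y) = ip z x - ip z y.
Proof. by rewrite ipDr ipNr. Qed.
Lemma ip_suml n (f : 'I_n -> V) z : ip (\sum_(i < n) f i) z = \sum_(i < n) ip (f i) z.
Proof. exact: (big_morph (fun x => ip x z) (fun x y => ipDl x y z) (ip0l z)). Qed.
Lemma ip_sumr n (f : 'I_n -> V) z : ip z (\sum_(i < n) f i) = \sum_(i < n) ip z (f i).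
Proof. exact: (big_morph (fun x => ip z x) (fun x y => ipDr x y z) (ip0r z)). Qed.
Lemma Re_ipC x y : complex.Re (ip y x) = complex.Re (ip x y).
Proof. by rewrite csym ReJ. Qed.
Lemma Re_ipB x y : complex.Re (ip (x - y) (x - y)) =
  complex.Re (ip x x) + complex.Re (ip y y) - 2 * complex.Re (ip x y).
Proof.
rewrite ipBl !ipBr !ReB (Re_ipC x y). lra.
Qed.
End Hilb.
Section Normal.
Variable R : realType.
Variable V : lmodType R[i].
Variable ip : V -> V -> R[i].
Hypothesis hV : is_hilbert ip.

Lemma normal_orth (F Fa : V -> V) (hadj : hadjoint ip ip F Fa)
  (hcomm : forall x, F (Fa x) = Fa (F x)) v w lam mu :
  F v = lam *: v -> F w = mu *: w -> lam != mu -> ip v w = 0.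
Proof.
case: hV => lin csym _ hdef _.
have hadj2 x y : ip (Fa x) y = ip x (F y).
  by rewrite csym -hadj -csym.
move=> hv hw hne.
have hFa : Fa w = mu^* *: w.
  apply/eqP; rewrite -subr_eq0; apply/eqP; apply: hdef.
  rewrite (ipBl lin) !(ipBr lin csym) !(ipZl lin) !(ipZr lin csym).
  rewrite -hadj hcomm hadj2 hadj2 -hadj hw !(ipZl lin) !(ipZr lin csym). rewrite conjCK.
  ring.
have : lam * ip v w = mu * ip v w.
  by rewrite -(ipZl lin) -hv hadj hFa (ipZr lin csym) conjCK.
move/eqP; rewrite -subr_eq0 -mulrBl mulf_eq0 subr_eq0 (negPf hne) /=.
by move/eqP.
Qed.
End Normal.
Section Dual.
Variable R : realType.
Lemma normc_real (r : R) : 0 <= r -> Normc.normc (r%:C) = r.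
Proof. move=> r0 /=. by rewrite [0 ^+ 2]expr2 mul0r addr0 sqrtr_sqr ger0_norm. Qed.

Variables (X Xs : lmodType R[i]) (ipX : X -> X -> R[i]) (pair : Xs -> X -> R[i]) (nXs : Xs -> R).
Hypothesis hXs : is_dual ipX pair nXs.

Lemma pairDr f phi psi : pair f (phi + psi) = pair f phi + pair f psi.
Proof. case: hXs => _ h _ _ _. by have := h 1 f phi psi; rewrite scale1r rmorph1 mul1r. Qed.
Lemma pair0l phi : pair 0 phi = 0.
Proof.
case: hXs => h _ _ _ _. have := h 1 0 0 phi. rewrite scale1r addr0 mul1r.
rewrite -{1}(addr0 (pair 0 phi)). by move/addrI.
Qed.
Lemma pairZl a f phi : pair (a *: f) phi = a * pair f phi.
Proof. case: hXs => h _ _ _ _. by rewrite -(addr0 (a *: f)) h pair0l addr0. Qed.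
Lemma pair_bound f phi : Normc.normc (pair f phi) <= nXs f * ipnorm ipX phi.
Proof. case: hXs => _ _ _ _ h. by case: (h f). Qed.
Lemma nXs_scale (r : R) f : 0 < r -> 0 <= nXs f -> nXs (r%:C *: f) <= r * nXs f.
Proof.
move=> r0 n0. apply/ler_addgt0Pr => e e0.
case: hXs => _ _ _ _ h. case: (h (r%:C *: f)) => _ /(_ e e0) [phi [hphi hlt]].
rewrite -lerBlDr. apply: (le_trans (ltW hlt)).
rewrite pairZl Normc.normcM normc_real; last exact: ltW. apply: ler_wpM2l; first exact: ltW.
apply: (le_trans (pair_bound f phi)). by rewrite ler_piMr.
Qed.
End Dual.
Lemma real_Im0 (R : realType) (z : R[i]) : complex.Im z = 0 -> z = (complex.Re z)%:C.
Proof. by case: z => a b /= ->. Qed.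

Lemma Re_scal2 (R : realType) (r : R) (z : R[i]) :
  complex.Re (r%:C * ((r%:C)^* * z)) = r ^+ 2 * complex.Re z.
Proof. case: z => a b /=. ring. Qed.

Lemma term_eq (R : realType) (l a : R[i]) (r : R) :
  complex.Re (a * l * (a^* * r%:C)) = (r * complex.Re l) * (complex.Re a ^+ 2 + complex.Im a ^+ 2).
Proof. case: l => l1 l2; case: a => a1 a2 /=. ring. Qed.

Lemma term_le0 (R : realType) (l a : R[i]) (r : R) : complex.Re l < 0 -> 0 < r ->
  complex.Re (a * l * (a^* * r%:C)) <= 0.
Proof.
move=> hl hr; rewrite term_eq. apply: mulr_le0_ge0; last by rewrite addr_ge0 ?sqr_ge0.
by apply: mulr_ge0_le0; apply: ltW.
Qed.

Lemma term_lt0 (R : realType) (l a : R[i]) (r : R) : complex.Re l < 0 -> 0 < r -> a != 0 ->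
  complex.Re (a * l * (a^* * r%:C)) < 0.
Proof.
move=> hl hr ha; rewrite term_eq.
have hx : r * complex.Re l < 0 by nra.
suff hy : 0 < complex.Re a ^+ 2 + complex.Im a ^+ 2 by nra.
move: ha; case: a => a1 a2 /= ha.
rewrite lt_neqAle addr_ge0 ?sqr_ge0 // andbT eq_sym.
apply: contra ha => /eqP h.
have h1 : a1 = 0 by apply/eqP; rewrite -sqrf_eq0 eq_le sqr_ge0 andbT -h lerDl sqr_ge0.
have h2 : a2 = 0 by apply/eqP; rewrite -sqrf_eq0 eq_le sqr_ge0 andbT -h lerDr sqr_ge0.
by rewrite h1 h2.
Qed.
Lemma arith1 (R : realType) (c0 t N : R) : 0 < c0 -> 0 <= N ->
  c0 * t ^+ 2 - t * N < 0 -> 0 < t /\ c0 ^+ 2 * t ^+ 2 < N ^+ 2.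
Proof.
move=> c0pos N0 key.
have tpos : 0 < t.
  rewrite ltNge; apply/negP => ht.
  have h1 : 0 <= c0 * t ^+ 2 by rewrite mulr_ge0 ?sqr_ge0 // ltW.
  have h2 : t * N <= 0 by rewrite mulr_le0_ge0.
  lra.
have cN : c0 * t < N by nra.
split => //. nra.
Qed.

Lemma arith2 (R : realType) (c0 t N : R) : 0 < t -> c0 ^+ 2 * t ^+ 2 < N ^+ 2 ->
  c0 ^+ 2 < t^-1 ^+ 2 * N ^+ 2.
Proof.
move=> tpos h. have t2 : 0 < t^-1 ^+ 2 by rewrite exprn_gt0 // invr_gt0.
rewrite -(ltr_pM2l t2) in h. move: h. by rewrite mulrCA -exprMn mulVf ?gt_eqF // expr1n mulr1.
Qed.

Section Main.
Variable R : realType.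
Variables (H X Xs : lmodType R[i])
  (ipH : H -> H -> R[i]) (ipX : X -> X -> R[i])
  (pair : Xs -> X -> R[i]) (nXs : Xs -> R).
Hypotheses (hH : is_hilbert ipH) (hX : is_hilbert ipX) (hXs : is_dual ipX pair nXs).
Variables (F : {linear H -> H}) (G : {linear X -> H}) (M : {linear Xs -> X})
  (Gs : {linear H -> Xs}) (Ms : {linear Xs -> X}) (M0 Cc : {linear Xs -> X}).
Variable Fa : H -> H.
Hypotheses (hadj : hadjoint ipH ipH F Fa) (hcomm : forall x, F (Fa x) = Fa (F x)).
Hypotheses (hGs : forall g phi, pair (Gs g) phi = ipH g (G phi))
  (hMs : dual_adjoint pair M Ms)
  (hF : forall g, F g = G (Ms (Gs g)))
  (hM : forall phi, M phi = M0 phi + Cc phi).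
Variable c0 : R.
Hypotheses (c0pos : 0 < c0) (hcoer : forall g,
      c0 * nXs (Gs g) ^+ 2 <= complex.Re (pair (Gs g) (M0 (Gs g)))).

Definition goodp (p : R[i] * H) := F p.2 = p.1 *: p.2 /\ p.2 <> 0 /\ complex.Re p.1 < 0.

Lemma kernel_vec m n (A : 'M[R[i]]_(m, n)) : (n < m)%N -> exists2 a : 'rV_m, a != 0 & a *m A = 0.
Proof.
move=> nm.
have hk : kermx A != 0.
  rewrite -mxrank_eq0 mxrank_ker. have := rank_leq_col A. move=> h. 
  apply/eqP => /eqP. rewrite subn_eq0 => h2. have := leq_trans h2 h. by rewrite leqNgt nm.
have [i hi] : exists i, row i (kermx A) != 0.
  apply/existsP; apply: contraR hk; rewrite negb_exists => /forallP h.
  apply/eqP/row_matrixP => i. rewrite row0. by apply/eqP; rewrite -[_ == _]negbK h.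
exists (row i (kermx A)) => //. by rewrite -row_mul mulmx_ker row0.
Qed.

Lemma step2 (s : seq (R[i] * H)) (ys : seq X) :
  (size ys < size s)%N -> (forall j, (j < size s)%N -> goodp (nth (0, 0) s j)) ->
  uniq (map fst s) ->
  exists u : Xs, nXs u <= 1 /\ c0 ^+ 2 < complex.Re (ipX (Cc u) (Cc u)) /\
    forall k, (k < size ys)%N -> ipX (Cc u) (nth 0 ys k) = 0.
Proof.
move=> hsz hgood huniq.
set m := size s. set n := size ys.
pose psi (j : nat) := (nth (0, 0) s j).2.
pose lam (j : nat) := (nth (0, 0) s j).1.
pose A : 'M[R[i]]_(m, n) := \matrix_(j, k) ipX (Cc (Gs (psi j))) (nth 0 ys k).
have [a anz aA] := kernel_vec A hsz.
have [j0 aj0] : exists j0, a 0 j0 != 0.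
  apply/existsP; apply: contraR anz; rewrite negb_exists => /forallP h.
  apply/eqP/matrixP => i j. rewrite !mxE (ord1 i). by apply/eqP; rewrite -[_ == _]negbK h.
pose psi0 := \sum_(j < m) a 0 j *: psi j.
pose phi := Gs psi0.
case: (hH) => linH csymH ipposH defH _.
case: (hX) => linX csymX ipposX defX _.
have hj (j : 'I_m) : goodp (nth (0, 0) s j) by apply: hgood.
have orth (j k : 'I_m) : j != k -> ipH (psi j) (psi k) = 0.
  move=> hjk. case: (hj j) => Fj _. case: (hj k) => Fk _.
  apply: (normal_orth hH hadj hcomm Fj Fk).
  rewrite /lam -!(nth_map (0, 0) 0 fst) //. by rewrite nth_uniq ?size_map.
have Fpsi0 : F psi0 = \sum_(j < m) (a 0 j * lam j) *: psi j.
  rewrite linear_sum; apply: eq_bigr => j _. case: (hj j) => Fj _.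
  by rewrite linearZ /= Fj scalerA.
have Reneg : complex.Re (ipH (F psi0) psi0) < 0.
  rewrite Fpsi0 (ip_suml linH).
  have e1 (j : 'I_m) : ipH ((a 0 j * lam j) *: psi j) psi0 =
      a 0 j * lam j * ((a 0 j)^* * (complex.Re (ipH (psi j) (psi j)))%:C).
    rewrite (ipZl linH) (ip_sumr linH csymH) (bigD1 j) //= big1 ?addr0.
      by rewrite (ipZr linH csymH) -real_Im0 //; case: (ipposH (psi j)).
    move=> k hk. by rewrite (ipZr linH csymH) orth ?mulr0 // eq_sym.
  rewrite (eq_bigr _ (fun j _ => e1 j)) Re_sum (bigD1 j0) //=.
  have hr (j : 'I_m) : 0 < complex.Re (ipH (psi j) (psi j)).
    case: (ipposH (psi j)) => hi hre. rewrite lt_neqAle hre andbT.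
    apply/eqP => h0. case: (hj j) => _ [hnz _]. apply: hnz; apply: defH.
    by rewrite (real_Im0 hi) -h0.
  rewrite -[X in _ < X](addr0 0). apply: ltr_leD.
    by apply: term_lt0 => //; case: (hj j0) => _ [].
  apply: sumr_le0 => j _. apply: term_le0 => //. by case: (hj j) => _ [].
have eqFM : ipH (F psi0) psi0 = pair phi (M phi).
  rewrite hF csymH -hGs -/phi hMs. exact: conjCK.
set t := nXs phi.
set N := ipnorm ipX (Cc phi).
have N0 : 0 <= N by apply: sqrtr_ge0.
have key : c0 * t ^+ 2 - t * N < 0.
  apply: le_lt_trans Reneg. rewrite eqFM hM (pairDr hXs) ReD.
  apply: lerD; first exact: hcoer.
  rewrite -mulNr. apply: le_trans (Re_le_norm _). rewrite mulNr lerN2.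
  exact: (pair_bound hXs).
have [tpos cN2] := arith1 c0pos N0 key.
have tipos : 0 < t^-1 by rewrite invr_gt0.
exists ((t^-1)%:C *: phi); split; last split.
- apply: le_trans (nXs_scale hXs tipos (ltW tpos)) _.
  by rewrite mulVf // gt_eqF.
- rewrite linearZ /= (ipZl linX) (ipZr linX csymX) Re_scal2.
  have -> : complex.Re (ipX (Cc phi) (Cc phi)) = N ^+ 2.
    by rewrite sqr_sqrtr //; case: (ipposX (Cc phi)).
  exact: arith2.
- move=> k hk. rewrite linearZ /= (ipZl linX).
  suff -> : ipX (Cc phi) (nth 0 ys k) = 0 by rewrite mulr0.
  have := congr1 (fun B : 'M_(1, n) => B 0 (Ordinal hk)) aA.
  rewrite /= !mxE => <-.
  rewrite /phi /psi0 !linear_sum (ip_suml linX). apply: eq_bigr => j _.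
  by rewrite !linearZ /= (ipZl linX) mxE.
Qed.
End Main.
Lemma para_bound (R : realType) (V : lmodType R[i]) (ip : V -> V -> R[i]) :
  is_hilbert ip -> forall P Q,
  complex.Re (ip (P - Q) (P - Q)) <= 2 * complex.Re (ip P P) + 2 * complex.Re (ip Q Q).
Proof.
case=> lin csym ippos _ _ P Q.
have h1 := Re_ipB lin csym P Q.
have h2 := Re_ipB lin csym P (- Q).
rewrite opprK (ipNl lin) (ipNr lin csym) (ipNr lin csym) opprK ReN in h2.
have h3 : 0 <= complex.Re (ip (P + Q) (P + Q)) by case: (ippos (P + Q)).
lra.
Qed.
Lemma sq_lt (R : realType) (a b : R) : 0 <= a -> a < b -> a ^+ 2 < b ^+ 2.
Proof. move=> ha hb. nra. Qed.

Lemma arith3 (R : realType) (c0 a b c d : R) :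
  a + b - 2 * 0 <= 2 * c + 2 * d ->
  c < (c0 / 2) ^+ 2 -> d < (c0 / 2) ^+ 2 ->
  c0 ^+ 2 < a -> c0 ^+ 2 < b -> c0 ^+ 2 = 4 * (c0 / 2) ^+ 2 -> False.
Proof. move=> h1 h2 h3 h4 h5 h6. have := sqr_ge0 c0. lra. Qed.

Theorem theorem3p6 (R : realType)
  (H X Xs : lmodType R[i])
  (ipH : H -> H -> R[i]) (ipX : X -> X -> R[i])
  (pair : Xs -> X -> R[i]) (nXs : Xs -> R)
  (hH : is_hilbert ipH) (hX : is_hilbert ipX)
  (hXs : is_dual ipX pair nXs)
  (F : {linear H -> H}) (G : {linear X -> H}) (M : {linear Xs -> X})
  (Gs : {linear H -> Xs}) (Ms : {linear Xs -> X})
  (M0 Cc : {linear Xs -> X})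
  (hFc : compact_op (ipnorm ipH) (ipnorm ipH) F)
  (hFn : normal_op ipH F)
  (hGb : bounded_op (ipnorm ipX) (ipnorm ipH) G)
  (hMb : bounded_op nXs (ipnorm ipX) M)
  (hGs : forall g phi, pair (Gs g) phi = ipH g (G phi))
  (hMs : dual_adjoint pair M Ms)
  (hF : forall g, F g = G (Ms (Gs g)))
  (hker : finite_dim_kernel Gs)
  (hM : forall phi, M phi = M0 phi + Cc phi)
  (hC : compact_op nXs (ipnorm ipX) Cc)
  (hM0 : dual_adjoint pair M0 M0)
  (hcoer : exists c0 : R, 0 < c0 /\ forall g,
      complex.Im (pair (Gs g) (M0 (Gs g))) = 0 /\
      c0 * nXs (Gs g) ^+ 2 <= complex.Re (pair (Gs g) (M0 (Gs g)))) :
  exists s : seq R[i], forall lam, op_eigenvalue F lam -> complex.Re lam < 0 -> lam \in s.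
Proof.
case: hcoer => c0 [c0pos hc]. 
have hcoer' : forall g, c0 * nXs (Gs g) ^+ 2 <= complex.Re (pair (Gs g) (M0 (Gs g))).
  by move=> g; case: (hc g).
case: hFn => Fa [hadj hcomm].
have st2 := step2 hH hX hXs hadj hcomm hGs hMs hF hM c0pos hcoer'.
case: (classic (exists s : seq R[i], forall lam, op_eigenvalue F lam -> complex.Re lam < 0 -> lam \in s)) => // hno.
exfalso.
have hnew : forall s : seq R[i], exists lam v, F v = lam *: v /\ v <> 0 /\ complex.Re lam < 0 /\ lam \notin s.
  move=> s. apply: NNPP => hn. apply: hno. exists s => lam [v [vnz Fv]] hlam.
  apply: NNPP => hs. apply: hn. exists lam, v. by split => //; split => //; split => //; apply/negP.
have step1 : forall n, exists s : seq (R[i] * H), size s = n /\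
    (forall j, (j < size s)%N -> goodp F (nth (0, 0) s j)) /\ uniq (map fst s).
  elim=> [|n [s [hs [hg hu]]]]; first by exists [::].
  have [lam [v [Fv [vnz [hl hni]]]]] := hnew (map fst s).
  exists ((lam, v) :: s); split; first by rewrite /= hs.
  split; last by rewrite /= hni hu.
  case=> [|j] /= hj; first by split.
  exact: hg.
have hex : forall ys : seq X, exists u : Xs, nXs u <= 1 /\ c0 ^+ 2 < complex.Re (ipX (Cc u) (Cc u)) /\
    forall k, (k < size ys)%N -> ipX (Cc u) (nth 0 ys k) = 0.
  move=> ys. have [s [hs [hg hu]]] := step1 (size ys).+1.
  apply: (@st2 s ys) => //. by rewrite hs.
pose next (ys : seq X) := proj1_sig (constructive_indefinite_description _ (hex ys)).
have hnext ys : nXs (next ys) <= 1 /\ c0 ^+ 2 < complex.Re (ipX (Cc (next ys)) (Cc (next ys))) /\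
    forall k, (k < size ys)%N -> ipX (Cc (next ys)) (nth 0 ys k) = 0.
  exact: (proj2_sig (constructive_indefinite_description _ (hex ys))).
pose fix S n := if n is n'.+1 then Cc (next (S n')) :: S n' else [::].
pose u n := next (S n).
have inS : forall m n, (m < n)%N -> Cc (u m) \in S n.
  move=> m; elim=> [//|n IH]; rewrite ltnS leq_eqVlt => /orP [/eqP ->|hmn].
    by rewrite /= inE eqxx.
  by rewrite /= inE (IH hmn) orbT.
have orthu : forall m n, (m < n)%N -> ipX (Cc (u n)) (Cc (u m)) = 0.
  move=> m n hmn. have hin := inS m n hmn.
  case: (hnext (S n)) => _ [_ h]. rewrite -(nth_index 0 hin). apply: h.
  by rewrite index_mem.
have hbd : exists B : R, forall n, nXs (u n) <= B.
  by exists 1 => n; case: (hnext (S n)).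
have [phis [l [hinc hconv]]] := hC u hbd.
have hc2 : 0 < c0 / 2 by rewrite divr_gt0.
have [N0 hN0] := hconv _ hc2.
have lt01 : (phis N0 < phis N0.+1)%N := hinc N0.
set x := Cc (u (phis N0.+1)). set y := Cc (u (phis N0)).
have hxy : ipX x y = 0 by apply: orthu.
have hx : c0 ^+ 2 < complex.Re (ipX x x) by case: (hnext (S (phis N0.+1))) => _ [].
have hy : c0 ^+ 2 < complex.Re (ipX y y) by case: (hnext (S (phis N0))) => _ [].
have nx := hN0 N0.+1 (leqnSn _). have ny := hN0 N0 (leqnn _).
rewrite -/x in nx. rewrite -/y in ny.
case: (hX) => linX csymX ipposX _ _.
have sqb : forall z : X, ipnorm ipX z < c0 / 2 -> complex.Re (ipX z z) < (c0 / 2) ^+ 2.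
  move=> z hz. have z0 : 0 <= complex.Re (ipX z z) by case: (ipposX z).
  rewrite -(sqr_sqrtr z0). apply: sq_lt => //. exact: sqrtr_ge0.
have bx := sqb _ nx. have by_ := sqb _ ny.
have hp := para_bound hX (x - l) (y - l).
have e : x - l - (y - l) = x - y by rewrite opprB addrA subrK.
rewrite e in hp.
rewrite Re_ipB // hxy Re0 in hp.
have e4 : c0 ^+ 2 = 4 * (c0 / 2) ^+ 2 by field.
move: hp bx by_ hx hy e4.
exact: arith3.
Qed.
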